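(* Let $B_n=\{z\in\mathbb C^n:\|z\|^2<1\}$ be the unit ball. If $F$ is a strongly pseudoconvex complex Finsler metric on $B_n$ that is $\mathrm{Aut}(B_n)$-invariant, then there is a constant $c>0$ such that $$F^2(z,v)=c\,\frac{(1-\|z\|^2)\|v\|^2+|\langle z,v\rangle|^2}{(1-\|z\|^2)^2}\quad\text{for all }z\in B_n,\ v\in T^{1,0}_zB_n\cong\mathbb C^n,$$ i.e. $F$ is a constant multiple of the Poincaré–Bergman metric.
   Context: $\mathrm{Aut}(B_n)$ is the group of holomorphic automorphisms of $B_n$; $F$ is $\mathrm{Aut}(B_n)$-invariant if $F(f(z),f_\ast v)=F(z,v)$ for all $f\in\mathrm{Aut}(B_n)$ and $(z,v)\in T^{1,0}B_n$. A strongly pseudoconvex complex Finsler metric on a complex manifold $M$ is a continuous $F:T^{1,0}M\to[0,\infty)$ with $F(z,v)=0$ iff $v=0$, $G=F^2$ smooth off the zero section, $G(z,\lambda v)=|\lambda|^2G(z,v)$ for all $\lambda\in\mathbb C$, and $(\partial^2G/\partial v^\alpha\partial\bar v^\beta)$ positive definite off the zero section. $\langle z,v\rangle=\sum_i z^i\overline{v^i}$. *)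

(* Defs.v *)
(* Complex numbers are R[i] (real-closed
   library) over an abstract R : realType; C^n is 'rV[R[i]]_n viewed as a
   normed module over R[i] (so `differentiable`/'d are COMPLEX Frechet
   derivatives, i.e. holomorphy). *)
From mathcomp Require Import all_boot all_order all_algebra.
From mathcomp Require Import all_classical all_reals all_analysis.
From mathcomp Require Import complex.
Set Implicit Arguments. Unset Strict Implicit. Unset Printing Implicit Defensive.
Import Order.TTheory GRing.Theory Num.Theory.
Import numFieldNormedType.Exports.
Local Open Scope ring_scope.
Local Open Scope classical_set_scope.

Section BallFinsler.
Variables (R : realType) (n : nat).
Local Notation C := (R[i]).

Definition CV : normedModType (C : numFieldType) := 'rV[C]_n.
(* points (z, v) of the holomorphic tangent bundle T^{1,0} C^n = C^n x C^n *)
Definition TP := (CV * CV)%type.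

Definition cabs2 (x : C) : R := (complex.Re x) ^+ 2 + (complex.Im x) ^+ 2.
Definition herm (z v : CV) : C := \sum_(i < n) z 0 i * ((v 0 i)^*)%C.
Definition sqnorm (z : CV) : R := \sum_(i < n) cabs2 (z 0 i).
Definition unit_ball : set CV := [set z | sqnorm z < 1].

Definition holomorphic_on (U : set CV) (f : CV -> CV) : Prop :=
  forall z, U z -> differentiable f z.

Definition is_aut_ball (f : CV -> CV) : Prop :=
  holomorphic_on unit_ball f /\ (forall z, unit_ball z -> unit_ball (f z)) /\
  exists g : CV -> CV, holomorphic_on unit_ball g /\
    (forall z, unit_ball z -> unit_ball (g z)) /\
    (forall z, unit_ball z -> g (f z) = z) /\
    (forall z, unit_ball z -> f (g z) = z).

Definition aut_invariant (F : CV -> CV -> R) : Prop :=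
  forall f, is_aut_ball f -> forall z v, unit_ball z ->
    F (f z) ('d f z v) = F z v.

(* real smoothness on TP (real dimension 4n): all iterated real directional
   derivatives exist and are continuous *)
Definition shift (p w : TP) (t : R) : TP :=
  (p.1 + (t%:C)%C *: w.1, p.2 + (t%:C)%C *: w.2).
Definition ddir (g : TP -> R) (w : TP) : TP -> R :=
  fun p => 'D_1 (fun t : R => g (shift p w t)) 0.
Fixpoint Ck (k : nat) (U : set TP) (g : TP -> R) : Prop :=
  (forall p, U p -> {for p, continuous g}) /\
  match k with
  | 0 => True
  | k'.+1 => forall w : TP,
      (forall p, U p -> derivable (fun t : R => g (shift p w t)) 0 1) /\
      Ck k' U (ddir g w)
  end.
Definition smooth_on (U : set TP) (g : TP -> R) : Prop := forall k, Ck k U g.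

(* Wirtinger second derivatives d^2 G / d v^a d conj(v^b), with
   d/dv = (d/dx - i d/dy)/2 and d/dconj(v) = (d/dx + i d/dy)/2 *)
Definition ev (a : 'I_n) : CV := delta_mx 0 a.
Definition dxv (a : 'I_n) : TP := (0, ev a).
Definition dyv (a : 'I_n) : TP := (0, 'i%C *: ev a).
Definition levi (G : TP -> R) (p : TP) : 'M[C]_n :=
  \matrix_(a, b)
    (((4%:R)^-1)%:C *
      ((ddir (ddir G (dxv b)) (dxv a) p + ddir (ddir G (dyv b)) (dyv a) p)%:C
       + 'i * (ddir (ddir G (dyv b)) (dxv a) p
               - ddir (ddir G (dxv b)) (dyv a) p)%:C))%C.

Definition Gsq (F : CV -> CV -> R) : TP -> R := fun p => F p.1 p.2 ^+ 2.

Definition strongly_pseudoconvex_finsler (F : CV -> CV -> R) : Prop :=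
  (forall z v, unit_ball z -> 0 <= F z v) /\
  (forall p : TP, unit_ball p.1 -> {for p, continuous (fun q : TP => F q.1 q.2)}) /\
  (forall z v, unit_ball z -> (F z v = 0 <-> v = 0)) /\
  smooth_on [set p : TP | unit_ball p.1 /\ p.2 != 0] (Gsq F) /\
  (forall z v (l : C), unit_ball z -> Gsq F (z, l *: v) = cabs2 l * Gsq F (z, v)) /\
  (forall p : TP, unit_ball p.1 -> p.2 != 0 ->
     forall xi : CV, xi != 0 ->
       0 < \sum_(a < n) \sum_(b < n) levi (Gsq F) p a b * xi 0 a * ((xi 0 b)^*)%C).

End BallFinsler.

(* Main.v *)
Require Import Defs.
From mathcomp Require Import all_boot all_order all_algebra.
From mathcomp Require Import all_classical all_reals all_analysis.
From mathcomp Require Import complex.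
From mathcomp Require Import ring lra.
From HB Require Import structures.
Import Order.TTheory GRing.Theory Num.Theory.
Import numFieldNormedType.Exports.
Local Open Scope ring_scope.

Module Helpers.
Set Implicit Arguments. Unset Strict Implicit. Unset Printing Implicit Defensive.

Section Alg.
Variable R : realType.
Local Notation C := (R[i]).

Lemma mulcJ (x : C) : x * (x^*)%C = (cabs2 x)%:C%C.
Proof. by rewrite /cabs2 add_Re2_Im2 normCK. Qed.

Lemma conjcM (a b : C) : ((a * b)^*)%C = (a^*)%C * (b^*)%C.
Proof. exact: rmorphM. Qed.
Lemma conjcD (a b : C) : ((a + b)^*)%C = (a^*)%C + (b^*)%C.
Proof. exact: rmorphD. Qed.
Lemma conjcN (a : C) : ((- a)^*)%C = - (a^*)%C.
Proof. exact: rmorphN. Qed.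
Lemma conjcB (a b : C) : ((a - b)^*)%C = (a^*)%C - (b^*)%C.
Proof. exact: rmorphB. Qed.
Lemma conjcV (a : C) : ((a^-1)^*)%C = ((a^*)%C)^-1.
Proof. exact: conjc_inv. Qed.
Lemma conjc2 : ((2 : C)^*)%C = 2.
Proof. exact: conjc_nat. Qed.
Lemma conjc1' : ((1 : C)^*)%C = 1.
Proof. exact: conjc1. Qed.

Lemma cabs2_ge0 (x : C) : 0 <= cabs2 x.
Proof. by rewrite /cabs2 addr_ge0 // sqr_ge0. Qed.

Lemma cabs2_eq0 (x : C) : cabs2 x = 0 -> x = 0.
Proof.
move=> h; have : (cabs2 x)%:C%C = 0 by rewrite h.
by rewrite -mulcJ => /eqP; rewrite mulf_eq0 conjc_eq0 orbb => /eqP.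
Qed.

Variable n : nat.
Implicit Types x y z w : CV R n.

Lemma hmDl x y w : herm (x + y) w = herm x w + herm y w.
Proof. by rewrite /herm -big_split; apply: eq_bigr => i _; rewrite mxE mulrDl. Qed.
Lemma hmDr x y w : herm w (x + y) = herm w x + herm w y.
Proof. by rewrite /herm -big_split; apply: eq_bigr => i _; rewrite mxE rmorphD mulrDr. Qed.
Lemma hmZl (k : C) x w : herm (k *: x) w = k * herm x w.
Proof. by rewrite /herm mulr_sumr; apply: eq_bigr => i _; rewrite mxE mulrA. Qed.
Lemma hmZr (k : C) x w : herm w (k *: x) = (k^*)%C * herm w x.
Proof. by rewrite /herm mulr_sumr; apply: eq_bigr => i _; rewrite mxE rmorphM mulrCA. Qed.
Lemma hmNl x w : herm (- x) w = - herm x w.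
Proof. by rewrite -scaleN1r hmZl mulN1r. Qed.
Lemma hmNr x w : herm w (- x) = - herm w x.
Proof. by rewrite -scaleN1r hmZr rmorphN rmorph1 mulN1r. Qed.
Lemma hmBl x y w : herm (x - y) w = herm x w - herm y w.
Proof. by rewrite hmDl hmNl. Qed.
Lemma hmBr x y w : herm w (x - y) = herm w x - herm w y.
Proof. by rewrite hmDr hmNr. Qed.
Lemma hm0r x : herm x 0 = 0.
Proof. by rewrite -(scale0r 0) hmZr rmorph0 mul0r. Qed.
Lemma hm0l x : herm 0 x = 0.
Proof. by rewrite -(scale0r 0) hmZl mul0r. Qed.
Lemma hmC x y : herm y x = (herm x y)^*%C.
Proof. rewrite /herm rmorph_sum; apply: eq_bigr => i _; by rewrite rmorphM /= conjcK mulrC. Qed.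
Lemma hm_self x : herm x x = (sqnorm x)%:C%C.
Proof. by rewrite /herm /sqnorm rmorph_sum; apply: eq_bigr => i _; rewrite mulcJ. Qed.
Lemma sqnorm_ge0 x : 0 <= sqnorm x.
Proof. by apply: sumr_ge0 => i _; apply: cabs2_ge0. Qed.
Lemma sqnorm_eq0 x : sqnorm x = 0 -> x = 0.
Proof.
move=> /eqP; rewrite psumr_eq0; last by move=> i _; apply: cabs2_ge0.
move=> /allP h; apply/rowP => i; rewrite mxE; apply: cabs2_eq0; apply/eqP.
by apply: h; rewrite mem_index_enum.
Qed.
Lemma cabs2_herm x y : cabs2 (herm x y) = cabs2 (herm y x).
Proof.
apply: complexI; rewrite -!mulcJ (hmC x y) conjcK mulrC //.
Qed.
End Alg.

Section E1.
Variable R : realType.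
Local Notation C := (R[i]).
Variable n : nat.
Local Notation e1 := (ev R (ord0 : 'I_n.+1)).
Implicit Types x y z w : CV R n.+1.

Lemma e1E i : e1 0 i = (i == ord0)%:R.
Proof. by rewrite /ev mxE eqxx. Qed.

Lemma hm_e1r z : herm z e1 = z 0 0.
Proof.
rewrite /herm (bigD1 ord0) //= big1 ?addr0; first by rewrite e1E eqxx conjc1 mulr1.
by move=> i /negbTE hi; rewrite e1E hi conjc0 mulr0.
Qed.
Lemma hm_e1l z : herm e1 z = (z 0 0)^*%C.
Proof. by rewrite hmC hm_e1r. Qed.
Lemma sqnorm_e1 : sqnorm e1 = 1.
Proof. by apply: complexI; rewrite -hm_self hm_e1r e1E eqxx. Qed.
Lemma cabs2_le_sqnorm z : cabs2 (z 0 0) <= sqnorm z.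
Proof.
rewrite /sqnorm (bigD1 ord0) //= lerDl; apply: sumr_ge0 => i _; exact: cabs2_ge0.
Qed.
Lemma coord_e1 (k : C) : (k *: e1) 0 0 = k.
Proof. by rewrite mxE e1E eqxx mulr1. Qed.
End E1.


Section Refl.
Variable R : realType.
Local Notation C := (R[i]).
Variable n : nat.
Implicit Types x y z w : CV R n.

Definition rc w : C := ((2 / sqnorm w)%:C)%C.
Definition refl w z : CV R n := z - (rc w * herm z w) *: w.

Lemma rc_key w : rc w * rc w * (sqnorm w)%:C%C = 2 * rc w.
Proof.
rewrite /rc; have [->|h] := eqVneq (sqnorm w) 0.
  rewrite invr0 mulr0; change ((0:R)%:C)%C with (0:C); by rewrite !(mulr0, mul0r).
rewrite (_ : (2:C) = ((2:R)%:C)%C); last by rewrite rmorph_nat.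
by rewrite -!rmorphM; congr (_%:C)%C; field.
Qed.

Lemma rc_conj w : (rc w)^*%C = rc w.
Proof. by rewrite /rc conjc_real. Qed.

Lemma refl_herm w x y : herm (refl w x) (refl w y) = herm x y.
Proof.
rewrite /refl hmBl !hmBr !hmZl !hmZr hm_self conjcM rc_conj.
rewrite -(hmC y w).
have k := rc_key w.
set c := rc w in k *; set W := (sqnorm w)%:C%C in k *.
transitivity (herm x y + herm x w * herm w y * (c * c * W - 2 * c)); first ring.
by rewrite k subrr mulr0 addr0.
Qed.

Lemma refl_sqnorm w x : sqnorm (refl w x) = sqnorm x.
Proof. by apply: complexI; rewrite -!hm_self refl_herm. Qed.

Lemma refl_invol w x : refl w (refl w x) = x.
Proof.
rewrite {1}/refl {2}/refl hmBl hmZl hm_self.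
have k := rc_key w.
set c := rc w in k *; set W := (sqnorm w)%:C%C in k *.
rewrite -addrA -opprD -scalerDl.
have -> : c * herm x w + c * (herm x w - c * herm x w * W) = 0.
  transitivity (herm x w * (2 * c - c * c * W)); first ring.
  by rewrite k subrr mulr0.
by rewrite scale0r subr0.
Qed.

Lemma refl_linear w : linear (refl w).
Proof.
move=> k x y; rewrite /refl hmDl hmZl scalerBr scalerA.
rewrite mulrDr scalerDl mulrCA -scalerA; set u := _ *: w; set v := _ *: w.
by rewrite opprD [RHS]addrACA.
Qed.

Lemma cont_sum (T : topologicalType) (K : numFieldType) (V : normedModType K)
  (I : Type) (r : seq I) (g : I -> T -> V) (t : T) :
  (forall i, {for t, continuous (g i)}) ->
  {for t, continuous (fun s => \sum_(i <- r) g i s)}.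
Proof.
move=> h; elim: r => [|a r IH].
  have -> : (fun s => \sum_(i <- [::]) g i s) = fun _ => 0.
    by apply/funext => s; rewrite big_nil.
  exact: cst_continuous.
have -> : (fun s => \sum_(i <- a :: r) g i s) =
   (g a + (fun s => \sum_(i <- r) g i s)).
  by apply/funext => s; rewrite big_cons.
exact: (continuousD (h a) IH).
Qed.

Lemma herm_cont w : continuous (fun z : CV R n => (herm z w : C^o)).
Proof.
move=> x; rewrite /herm. apply: cont_sum => i.
apply: (@continuousM C (CV R n) (fun s : CV R n => s 0 i) (fun _ => (w 0 i)^*%C) x).
  exact: coord_continuous.
exact: cst_continuous.
Qed.

Lemma refl_cont w : continuous (refl w).
Proof.
move=> x.
apply: (@continuousB C (CV R n) (CV R n) id (fun z => (rc w * herm z w) *: w) x).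
  exact: cvg_id.
apply: (@continuousZr_tmp C (CV R n) (CV R n) (fun z => rc w * herm z w) w x).
apply: (@continuousM C (CV R n) (fun _ => rc w) (fun z => herm z w) x).
  exact: cst_continuous.
exact: herm_cont.
Qed.

Definition reflL w : {linear CV R n -> CV R n} :=
  HB.pack (refl w) (GRing.isLinear.Build _ _ _ _ (refl w) (refl_linear w)).

Lemma refl_diff w x : differentiable (refl w) x.
Proof.
have := @linear_differentiable C (CV R n) (CV R n) (reflL w) x.
move=> h; apply: h; exact: refl_cont.
Qed.
Lemma refl_d w x v : 'd (refl w) x v = refl w v.
Proof.
have := @diff_lin C (CV R n) (CV R n) (reflL w) x.
move=> h; rewrite h //; exact: refl_cont.
Qed.

Lemma refl_aut w : is_aut_ball (refl w).
Proof.
have hb : forall z, unit_ball z -> unit_ball (refl w z).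
  by move=> z; rewrite /unit_ball /= refl_sqnorm.
split; first by move=> z _; apply: refl_diff.
split=> //; exists (refl w); split; first by move=> z _; apply: refl_diff.
by split=> //; split=> z _; rewrite refl_invol.
Qed.
End Refl.


Section Align.
Variable R : realType.
Local Notation C := (R[i]).
Variable m : nat.
Local Notation e1 := (ev R (ord0 : 'I_m.+1)).

Lemma realC_mul (a b : R) : ((a * b)%:C)%C = (a%:C)%C * (b%:C)%C :> C.
Proof. exact: rmorphM. Qed.
Lemma realC_add (a b : R) : ((a + b)%:C)%C = (a%:C)%C + (b%:C)%C :> C.
Proof. exact: rmorphD. Qed.
Lemma realC_sub (a b : R) : ((a - b)%:C)%C = (a%:C)%C - (b%:C)%C :> C.
Proof. exact: rmorphB. Qed.

Lemma align (x : CV R m.+1) : exists w (b : C),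
  refl w x = b *: e1 /\ cabs2 b = sqnorm x.
Proof.
set X := sqnorm x; set rho := Num.sqrt X; set x1 := x 0 0.
set r1 := Num.sqrt (cabs2 x1).
have X0 : 0 <= X by apply: sqnorm_ge0.
have rhoE : rho ^+ 2 = X by rewrite sqr_sqrtr.
have r1E : r1 ^+ 2 = cabs2 x1 by rewrite sqr_sqrtr // cabs2_ge0.
pose b : C := if x1 == 0 then (rho%:C)%C else ((rho / r1)%:C)%C * x1.
have F1 : (b^*)%C * x1 = ((rho * r1)%:C)%C.
  rewrite /b; case: eqP => [h0|/eqP h].
    rewrite h0 mulr0 /r1 h0 (_ : cabs2 0 = 0) ?sqrtr0 ?mulr0 //.
    by rewrite /cabs2 /= expr0n /= addr0.
  have r10 : r1 != 0.
    apply/eqP => h1; move: r1E; rewrite h1 expr0n /= => /esym/cabs2_eq0.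
    by move/eqP: h.
  rewrite conjcM conjc_real -mulrA [_^*%C * _]mulrC mulcJ -realC_mul -r1E.
  by congr (_%:C)%C; field.
have F2 : b * (b^*)%C = (X%:C)%C.
  rewrite mulcJ; congr (_%:C)%C; apply: complexI; rewrite -mulcJ.
  rewrite /b; case: eqP => [h|/eqP h].
    by rewrite conjc_real -realC_mul -expr2 rhoE.
  have r10 : r1 != 0.
    apply/eqP => h1; move: r1E; rewrite h1 expr0n /= => /esym/cabs2_eq0.
    by move/eqP: h.
  rewrite conjcM conjc_real mulrACA mulcJ -!realC_mul -r1E.
  by congr (_%:C)%C; rewrite -rhoE; field.
have F3 : b * (x1^*)%C = ((rho * r1)%:C)%C.
  by rewrite -[b]conjcK -conjcM F1 conjc_real.
set w := x - b *: e1.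
have Hxw : herm x w = ((X - rho * r1)%:C)%C.
  by rewrite /w hmBr hmZr hm_e1r hm_self -/x1 F1 realC_sub.
have Hww : sqnorm w = 2 * (X - rho * r1).
  apply: complexI; rewrite -hm_self /w hmBl !hmBr !hmZl !hmZr hm_self hm_e1r hm_e1l.
  rewrite (_ : herm e1 e1 = 1); last by rewrite hm_self sqnorm_e1.
  rewrite -/x1 mulr1 F1 F2 F3 -/X !realC_mul !realC_sub.
  rewrite (_ : ((2:R)%:C)%C = 2 :> C); last by rewrite rmorph_nat.
  ring.
exists w, b; split; last first.
  by apply: complexI; rewrite -mulcJ F2.
have [t0|t0] := eqVneq (X - rho * r1) 0.
  have w0 : w = 0 by apply: sqnorm_eq0; rewrite Hww t0 mulr0.
  rewrite /refl w0 scaler0 subr0.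
  by move: w0; rewrite /w => /eqP; rewrite subr_eq0 => /eqP.
rewrite /refl Hxw /rc Hww -realC_mul.
rewrite (_ : 2 / (2 * (X - rho * r1)) * (X - rho * r1) = 1); last by field.
by rewrite scale1r /w opprB addrC subrK.
Qed.
End Align.


Section Mob.
Variable R : realType.
Local Notation C := (R[i]).
Variable m : nat.
Local Notation e1 := (ev R (ord0 : 'I_m.+1)).
Local Notation CVm := (CV R m.+1).

Definition msC (a : C) : C := ((Num.sqrt (1 - cabs2 a))%:C)%C.
Definition mden (a : C) (z : CVm) : C := 1 - (a^*)%C * z 0 0.
Definition mnum (a : C) (z : CVm) : CVm :=
  msC a *: z + ((1 - msC a) * z 0 0 - a) *: e1.
Definition mob (a : C) (z : CVm) : CVm := (mden a z)^-1 *: mnum a z.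

Lemma cabs2N (a : C) : cabs2 (- a) = cabs2 a.
Proof. by apply: complexI; rewrite -!mulcJ conjcN mulrNN. Qed.

Lemma msCN a : msC (- a) = msC a.
Proof. by rewrite /msC cabs2N. Qed.

Lemma msC_conj a : (msC a)^*%C = msC a.
Proof. by rewrite /msC conjc_real. Qed.

Lemma msC_sq a : cabs2 a <= 1 -> msC a * msC a = 1 - a * (a^*)%C.
Proof.
move=> h; rewrite /msC -realC_mul -expr2 sqr_sqrtr ?subr_ge0 //.
by rewrite realC_sub mulcJ.
Qed.

Lemma conj1ms a : ((1 - msC a)^*)%C = 1 - msC a.
Proof.
rewrite (_ : 1 - msC a = ((1 - Num.sqrt (1 - cabs2 a))%:C)%C) ?conjc_real //.
by rewrite realC_sub.
Qed.

Lemma msC_neq0 a : cabs2 a < 1 -> msC a != 0.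
Proof.
move=> h; rewrite /msC; apply/eqP => /(congr1 (@complex.Re R)) /=.
move/eqP; rewrite sqrtr_eq0 => h'; move: h; by rewrite -subr_gt0 ltNge h'.
Qed.

Lemma coordD (u v : CVm) : (u + v) 0 0 = u 0 0 + v 0 0.
Proof. by rewrite mxE. Qed.
Lemma coordZ (k : C) (u : CVm) : (k *: u) 0 0 = k * u 0 0.
Proof. by rewrite mxE. Qed.
Lemma e100 : e1 0 0 = 1.
Proof. by rewrite e1E eqxx. Qed.

Lemma cabs2M (x y : C) : cabs2 (x * y) = cabs2 x * cabs2 y.
Proof.
by apply: complexI; rewrite realC_mul -!mulcJ conjcM mulrACA.
Qed.
Lemma cabs2J (x : C) : cabs2 (x^*)%C = cabs2 x.
Proof. by apply: complexI; rewrite -!mulcJ conjcK mulrC. Qed.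

Lemma mden_neq0 a z : cabs2 a < 1 -> unit_ball z -> mden a z != 0.
Proof.
move=> ha hz; apply/eqP; rewrite /mden => /eqP; rewrite subr_eq0 => /eqP h.
have : cabs2 ((a^*)%C * z 0 0) = 1.
  by rewrite -h /cabs2 /= expr1n expr0n /= addr0.
rewrite cabs2M cabs2J.
have h1 := cabs2_le_sqnorm z; have h2 := cabs2_ge0 a; have h3 := cabs2_ge0 (z 0 0).
rewrite /unit_ball /= in hz.
move=> e; nra.
Qed.


Lemma herm_mnum a z : herm (mnum a z) (mnum a z) =
  msC a * msC a * ((sqnorm z)%:C)%C
  + msC a * ((1 - msC a) * (z 0 0)^*%C - a^*%C) * z 0 0
  + ((1 - msC a) * z 0 0 - a) * msC a * (z 0 0)^*%C
  + ((1 - msC a) * z 0 0 - a) * ((1 - msC a) * (z 0 0)^*%C - a^*%C).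
Proof.
rewrite /mnum !hmDl !hmDr !hmZl !hmZr hm_self hm_e1r hm_e1l.
rewrite (_ : herm e1 e1 = 1); last by rewrite hm_self sqnorm_e1.
rewrite !conjcB !conjcM msC_conj conj1ms; ring.
Qed.

Lemma cabs2_gt0 (x : C) : x != 0 -> 0 < cabs2 x.
Proof.
move=> h; rewrite lt_def cabs2_ge0 andbT; apply/eqP => /cabs2_eq0 h0.
by move/eqP: h.
Qed.

Lemma cancel2 (D E X : C) : D != 0 -> E != 0 -> D^-1 * (E^-1 * X) * (D * E) = X.
Proof.
move=> hD hE; transitivity ((D^-1 * D) * (E^-1 * E) * X); first ring.
by rewrite !mulVf // !mul1r.
Qed.

Lemma poly_ball (a z1 s Z ac z1c : C) :
  (1 - ac * z1) * (1 - a * z1c) -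
  (s * s * Z + s * ((1 - s) * z1c - ac) * z1 +
   ((1 - s) * z1 - a) * s * z1c +
   ((1 - s) * z1 - a) * ((1 - s) * z1c - ac)) -
  (1 - a * ac) * (1 - Z) = (Z - z1 * z1c) * (1 - a * ac - s * s).
Proof. ring. Qed.

Lemma mob_ball a z : cabs2 a < 1 -> unit_ball z -> unit_ball (mob a z).
Proof.
move=> ha hz; have D0 := mden_neq0 ha hz.
have hz' : sqnorm z < 1 by [].
rewrite /unit_ball /=.
have key : (1 - sqnorm (mob a z)) * cabs2 (mden a z) =
           (1 - cabs2 a) * (1 - sqnorm z).
  apply: complexI; rewrite !realC_mul !realC_sub -!hm_self -!mulcJ /mob.
  rewrite hmZl hmZr herm_mnum conjcV.
  have DJ0 : (mden a z)^*%C != 0 by rewrite conjc_eq0.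
  have k := msC_sq (ltW ha).
  rewrite /mden !conjcB !conjcM conjcK conjc1' in D0 DJ0 *.
  rewrite (_ : ((1:R)%:C)%C = 1 :> C) //.
  set s := msC a in k *.
  have [z1 z1E] : exists z1 : C, z 0 0 = z1 by eexists.
  rewrite z1E in D0 DJ0 *.
  rewrite hm_self; set Z := ((sqnorm z)%:C)%C.
  apply/eqP; rewrite -subr_eq0; apply/eqP.
  transitivity ((Z - z1 * z1^*%C) * (1 - a * a^*%C - s * s)).
    rewrite mulrBl mul1r cancel2 //; exact: poly_ball.
  by rewrite k subrr mulr0.
have hD := cabs2_gt0 D0.
have h1 : 0 < (1 - cabs2 a) * (1 - sqnorm z) by rewrite mulr_gt0 // subr_gt0.
rewrite -key in h1; rewrite -subr_gt0.
by move: h1; rewrite pmulr_lgt0.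
Qed.


Lemma mob_inv_coef (a ac z1 s D w1 : C) : D = 1 - ac * z1 -> D != 0 -> s != 0 ->
  s * s = 1 - a * ac ->
  w1 = D^-1 * (s * z1 + ((1 - s) * z1 - a)) ->
  ((1 - (- ac) * w1)^-1 * (s * (D^-1 * s)) = 1) /\
  ((1 - (- ac) * w1)^-1 * (s * (D^-1 * ((1 - s) * z1 - a))) +
   (1 - (- ac) * w1)^-1 * ((1 - s) * w1 - (- a)) = 0).
Proof.
move=> hD D0 s0 hs hw; subst D w1.
have E : 1 - (- ac) * ((1 - ac * z1)^-1 * (s * z1 + ((1 - s) * z1 - a))) =
   s * s * (1 - ac * z1)^-1.
  rewrite hs; field; by [].
rewrite E; split.
  by field; rewrite s0 D0.
transitivity ((s * s)^-1 * (z1 * (1 - a * ac - s * s))).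
  by field; rewrite s0 D0.
by rewrite hs subrr !mulr0.
Qed.

Lemma mob_inv a z : cabs2 a < 1 -> unit_ball z -> mob (- a) (mob a z) = z.
Proof.
move=> ha hz; have D0 := mden_neq0 ha hz.
have s0 := msC_neq0 ha; have hs := msC_sq (ltW ha).
have hw : (mob a z) 0 0 = (mden a z)^-1 * (msC a * z 0 0 + ((1 - msC a) * z 0 0 - a)).
  by rewrite /mob /mnum coordZ coordD !coordZ e100 mulr1.
have [c1 c2] := mob_inv_coef (erefl (mden a z)) D0 s0 hs hw.
rewrite {1}/mob /mnum msCN /mden conjcN -/(mden a z).
rewrite {2}/mob /mnum !scalerDr !scalerA -addrA -scalerDl.
rewrite -/(mden a z) in c1 c2.
set X := (1 - - a^*%C * mob a z 0 0)^-1 in c1 c2 *.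
set s := msC a in c1 c2 *; set D := mden a z in c1 c2 *.
rewrite (_ : X * s / D * s = 1); last by rewrite -c1; ring.
rewrite (_ : X * s / D * ((1 - s) * z 0 0 - a) + X * ((1 - s) * mob a z 0 0 - - a) = 0).
  by rewrite scale1r scale0r addr0.
by rewrite -c2; ring.
Qed.

End Mob.


Section Bil.
Variable R : realType.
Variable m : nat.
Local Notation C := (R[i]).
Local Notation CVm := (CV R m.+1).

Lemma scale_is_bilinear :
  bilinear_for
    (GRing.Scale.Law.clone _ _ *:%R _) (GRing.Scale.Law.clone _ _ *:%R _)
    (@GRing.scale C^o CVm).
Proof.
split=> [u'|u] a x y /=.
- by rewrite scalerDl scalerA.
- by rewrite scalerDr !scalerA mulrC.
Qed.
HB.instance Definition _ := bilinear_isBilinear.Build C C^o CVm CVm _ _ (@GRing.scale C^o CVm)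
  scale_is_bilinear.

Lemma scale_diff (p : C^o * CVm) :
  differentiable (fun q : C^o * CVm => q.1 *: q.2) p /\
  'd (fun q : C^o * CVm => q.1 *: q.2) p = (fun q => p.1 *: q.2 + q.1 *: p.2) :> (_ -> _).
Proof.
have hc : continuous (fun q : C^o * CVm => q.1 *: q.2) by exact: scale_continuous.
split; first exact: differentiable_bilin.
exact: diff_bilin.
Qed.
End Bil.

Section MobD.
Variable R : realType.
Variable m : nat.
Local Notation C := (R[i]).
Local Notation CVm := (CV R m.+1).
Local Notation e1 := (ev R (ord0 : 'I_m.+1)).

Definition Lm (a : C) (z : CVm) : CVm := msC a *: z + ((1 - msC a) * z 0 0) *: e1.

Lemma Lm_linear a : linear (Lm a).
Proof.
move=> k x y; rewrite /Lm !mxE scalerDr !scalerA mulrDr scalerDl.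
rewrite scalerDr !scalerA [msC a * k]mulrC [(1 - msC a) * (k * _)]mulrCA.
by rewrite addrACA.
Qed.

Lemma Lm_cont a : continuous (Lm a).
Proof.
move=> x.
apply: (@continuousD C CVm CVm (fun z => msC a *: z) (fun z => ((1 - msC a) * z 0 0) *: e1) x).
  exact: scaler_continuous.
apply: (@continuousZr_tmp C CVm CVm (fun z => (1 - msC a) * z 0 0) e1 x).
apply: (@continuousM C CVm (fun _ => 1 - msC a) (fun z : CVm => z 0 0) x).
  exact: cst_continuous.
exact: coord_continuous.
Qed.

Definition LmL a : {linear CVm -> CVm} :=
  HB.pack (Lm a) (GRing.isLinear.Build _ _ _ _ (Lm a) (Lm_linear a)).

Lemma mnumE a : mnum a = (Lm a : CVm -> CVm) + cst ((- a) *: e1).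
Proof.
apply/funext => z; rewrite /mnum /Lm /= -addrA; congr (_ + _).
by rewrite scalerDl.
Qed.

Lemma mnum_diff a z : differentiable (mnum a) z /\ forall v, 'd (mnum a) z v = Lm a v.
Proof.
have dL : differentiable (Lm a) z.
  have := @linear_differentiable C CVm CVm (LmL a) z.
  by move=> h; apply: h; exact: Lm_cont.
have dLE : 'd (Lm a) z = Lm a :> (_ -> _).
  have := @diff_lin C CVm CVm (LmL a) z.
  by move=> h; rewrite h //; exact: Lm_cont.
have dC : differentiable (cst (- a *: e1) : CVm -> CVm) z by [].
rewrite mnumE; split; first by apply: differentiableD.
move=> v.
have h1 := congr1 (fun f => f v) dLE.
have h2 := congr1 (fun f => f v) (@diff_cst C CVm CVm (- a *: e1) z).
have h3 := congr1 (fun f => f v) (diffD dL dC).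
simpl in h1, h2, h3.
exact: (etrans h3 (etrans (congr2 +%R h1 h2) (addr0 _))).
Qed.

Implicit Types (a : C).
Lemma mden_diff a z : differentiable (fun z : CVm => (mden a z : C^o)) z.
Proof.
rewrite /mden.
have h1 : differentiable (fun z : CVm => (z 0 0 : C^o)) z by exact: differentiable_coord.
have h2 : differentiable (fun z : CVm => ((a^*)%C * z 0 0 : C^o)) z.
  by apply: (@differentiableM C CVm (cst (a^*)%C) (fun z : CVm => z 0 0)).
exact: (@differentiableB C CVm C^o (cst 1) (fun z : CVm => (a^*)%C * z 0 0) z).
Qed.

Definition mP a (z : CVm) : C^o * CVm := ((mden a z)^-1, mnum a z).

Lemma mobE a : @mob R m a = (fun q : C^o * CVm => q.1 *: q.2) \o mP a.
Proof. by []. Qed.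

Lemma mP_diff a z : mden a z != 0 -> differentiable (mP a) z.
Proof.
move=> D0; apply: differentiable_pair.
  exact: (@differentiableV C CVm (mden a) z (mden_diff a z) D0).
by case: (mnum_diff a z).
Qed.

Lemma mob_diff a z : mden a z != 0 -> differentiable (@mob R m a) z.
Proof.
move=> D0; rewrite mobE; apply: differentiable_comp; first exact: mP_diff.
by case: (scale_diff (mP a z)).
Qed.


Lemma mnum_x0 a : mnum a (a *: e1) = 0.
Proof.
rewrite /mnum coordZ e100 mulr1 scalerA -scalerDl.
by rewrite (_ : msC a * a + ((1 - msC a) * a - a) = 0) ?scale0r //; ring.
Qed.

Lemma mob_x0 a : mob a (a *: e1) = 0.
Proof. by rewrite /mob mnum_x0 scaler0. Qed.

Lemma mob_d a v : mden a (a *: e1) != 0 ->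
  'd (@mob R m a) (a *: e1) v = (mden a (a *: e1))^-1 *: Lm a v.
Proof.
move=> D0; set x := a *: e1.
have dP := mP_diff D0.
have [dS dSE] := scale_diff (mP a x).
have dh := @differentiableV C CVm (mden a) x (mden_diff a x) D0.
have [dN dNE] := mnum_diff a x.
have e1 := congr1 (fun f => f v) (diff_comp dP dS).
have e2 := congr1 (fun f => f ('d (mP a) x v)) dSE.
have e3 := congr1 (fun f => f v) (diff_pair dh dN).
simpl in e1, e2, e3.
have e4 : ('d (mP a) x v).2 = Lm a v := etrans (congr1 snd e3) (dNE v).
rewrite mobE.
transitivity ((mP a x).1 *: ('d (mP a) x v).2 + ('d (mP a) x v).1 *: (mP a x).2).
  exact: (etrans e1 e2).
have mn0 : (mP a x).2 = 0 by exact: mnum_x0.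
rewrite mn0 scaler0 addr0.
exact: (congr1 (fun t => (mP a x).1 *: t) e4).
Qed.

End MobD.


Section Fin.
Variable R : realType.
Variable m : nat.
Local Notation C := (R[i]).
Local Notation CVm := (CV R m.+1).
Local Notation e1 := (ev R (ord0 : 'I_m.+1)).
Implicit Types (a b : C).

Lemma mob_aut a : cabs2 a < 1 -> is_aut_ball (@mob R m a).
Proof.
move=> ha; have ha' : cabs2 (- a) < 1 by rewrite cabs2N.
split; first by move=> z hz; apply: mob_diff; apply: mden_neq0.
split; first by move=> z hz; apply: mob_ball.
exists (@mob R m (- a)); split; first by move=> z hz; apply: mob_diff; apply: mden_neq0.
split; first by move=> z hz; apply: mob_ball.
split=> z hz; first exact: mob_inv.
by have := mob_inv ha' hz; rewrite opprK.
Qed.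

Lemma sqnorm_be1 b : sqnorm (b *: e1) = cabs2 b.
Proof.
apply: complexI; rewrite -hm_self -mulcJ hmZl hmZr hm_self sqnorm_e1.
by rewrite mulr1 mulrC.
Qed.

Lemma realC_inv (x : R) : ((x^-1)%:C)%C = ((x%:C)%C)^-1 :> C.
Proof. exact: fmorphV. Qed.

Lemma sq_final b (u : CVm) : cabs2 b < 1 ->
  sqnorm ((mden b (b *: e1))^-1 *: Lm b u) =
  ((1 - cabs2 b) * sqnorm u + cabs2 b * cabs2 (u 0 0)) / (1 - cabs2 b) ^+ 2.
Proof.
move=> hb; have hs := msC_sq (ltW hb).
have X0 : 1 - cabs2 b != 0 by rewrite subr_eq0 eq_sym lt_eqF.
apply: complexI.
rewrite -hm_self hmZl hmZr /Lm !hmDl !hmDr !hmZl !hmZr hm_e1r hm_e1l.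
rewrite (_ : herm e1 e1 = 1); last by rewrite hm_self sqnorm_e1.
rewrite hm_self /mden coordZ e100 mulr1.
rewrite !mulr1 conjcV conjcB !conjcM !conjcK conjc1' msC_conj conj1ms.
rewrite expr2 !realC_mul realC_inv !realC_mul realC_add !realC_mul realC_sub -!mulcJ.
set s := msC b in hs *; set U := ((sqnorm u)%:C)%C.
have [u1 ->] : exists u1 : C, u 0 0 = u1 by eexists.
have XC : 1 - b * b^*%C != 0.
  apply/eqP => h; move/eqP: X0; apply; apply: complexI.
  by rewrite realC_sub -mulcJ h.
have XC' : 1 - b^*%C * b != 0 by rewrite mulrC.
transitivity ((1 - b^*%C * b)^-1 * ((1 - b * b^*%C)^-1 *
   (s * s * U + (1 - s * s) * (u1 * u1^*%C)))); first ring.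
rewrite hs (_ : ((1:R)%:C)%C = 1) //; field.
exact: XC.
Qed.
End Fin.

Lemma refl0 (R : realType) (n : nat) (w : CV R n) : refl w 0 = 0.
Proof. by rewrite /refl hm0l mulr0 scale0r subr0. Qed.

End Helpers.
Import Helpers.

Theorem theorem1p2 (R : realType) (n : nat) (F : CV R n -> CV R n -> R) :
  strongly_pseudoconvex_finsler F -> aut_invariant F ->
  exists c : R, 0 < c /\
    forall z v : CV R n, unit_ball z ->
      F z v ^+ 2 = c * (((1 - sqnorm z) * sqnorm v + cabs2 (herm z v))
                        / (1 - sqnorm z) ^+ 2).
Proof.
case: n F => [|k] F [Fnn [Fcont [F0 [Fsm [Fhom Flevi]]]]] Finv.
  exists 1; split; first exact: ltr01.
  move=> z v hz; have v0 : v = 0 by apply/rowP => -[].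
  rewrite (proj2 (F0 z v hz) v0) /sqnorm /herm !big_ord0.
  rewrite (_ : cabs2 0 = 0 :> R); last by rewrite /cabs2 /= expr0n /= addr0.
  by rewrite expr0n /= mulr0 addr0 mul0r mulr0.
pose e1 : CV R k.+1 := ev R ord0.
have sq0 : sqnorm (0 : CV R k.+1) = 0.
  by apply: complexI; rewrite -hm_self hm0l.
have b0 : unit_ball (0 : CV R k.+1) by rewrite /unit_ball /= sq0 ltr01.
have e1n0 : e1 != 0.
  apply/eqP => /(congr1 (fun x : CV R k.+1 => x 0 0)).
  by rewrite /e1 e100 mxE => /eqP; rewrite oner_eq0.
have Fp : 0 < F 0 e1.
  rewrite lt_def Fnn // andbT; apply/eqP => h.
  by move/eqP: e1n0; apply; apply: (proj1 (F0 0 e1 b0)).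
set c := F 0 e1 ^+ 2.
have cpos : 0 < c by rewrite /c exprn_gt0.
have hom : forall z v l, unit_ball z -> F z (l *: v) ^+ 2 = cabs2 l * F z v ^+ 2.
  by move=> z v l hz; have := Fhom z v l hz.
have rinv : forall w z v, unit_ball z -> F (refl w z) (refl w v) = F z v.
  move=> w z v hz; have H := Finv _ (refl_aut w) z v hz.
  exact: (etrans (congr1 (F (refl w z)) (esym (refl_d w z v))) H).
have minv : forall b u, cabs2 b < 1 ->
    F 0 ((mden b (b *: e1))^-1 *: Lm b u) = F (b *: e1) u.
  move=> b u hb'.
  have hb : unit_ball (b *: e1) by rewrite /unit_ball /= sqnorm_be1.
  have D0 := mden_neq0 hb' hb.
  have H := Finv _ (mob_aut k hb') (b *: e1) u hb.
  exact: (etrans (congr2 F (esym (mob_x0 k b)) (esym (mob_d u D0))) H).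
have at0 : forall v, F 0 v ^+ 2 = c * sqnorm v.
  move=> v; have [w [b [hw hbb]]] := align v.
  have := rinv w 0 v b0; rewrite refl0 hw => <-.
  by rewrite hom // hbb mulrC.
exists c; split => // z v hz.
have [w [b [hw hbb]]] := align z.
set u := refl w v.
have hb' : cabs2 b < 1 by rewrite hbb.
have E1 : F z v = F (b *: e1) u by rewrite -hw /u rinv.
have hH : cabs2 (herm z v) = cabs2 b * cabs2 (u 0 0).
  rewrite -(refl_herm w z v) hw -/u hmZl hm_e1l cabs2M cabs2J //.
rewrite E1 -(minv b u hb') at0 sq_final // hH -hbb /u refl_sqnorm.
reflexivity.
Qed.
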